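(* Let $(X,*,0)$ be a KU-algebra, let $d: X \to X$ be a self map, and let $\mu, \beta: X \to [0,1]$ be fuzzy left derivations KU-ideals of $X$ (with respect to $d$). Then the Cartesian product $\mu \times \beta: X \times X \to [0,1]$, $(\mu\times\beta)(x,y) = \min\{\mu(x), \beta(y)\}$, is a fuzzy left derivations KU-ideal of the KU-algebra $X \times X$ with respect to the self map $D(x,y) = (d(x), d(y))$.
   Context: A KU-algebra is a set $X$ with a binary operation $*$ and a constant $0$ such that for all $x,y,z \in X$: (KU1) $(x*y)*[(y*z)*(x*z)] = 0$; (KU2) $x*0 = 0$; (KU3) $0*x = x$; (KU4) $x*y = 0 = y*x$ implies $x = y$. The product $X \times X$ is a KU-algebra with operation $(x,y)*(u,v) = (x*u, y*v)$ and constant $(0,0)$. Given a KU-algebra $Y$ with constant $0_Y$ and a self map $D: Y \to Y$, a fuzzy set $\nu: Y \to [0,1]$ is a fuzzy left derivations KU-ideal of $Y$ if (F1) $\nu(0_Y) \ge \nu(a)$ for all $a \in Y$, and (FL2) $\nu(D(a*c)) \ge \min\{\nu(D(a)*(b*c)), \nu(D(b))\}$ for all $a,b,c \in Y$. The paper writes $d(x,y)$ for the self map of $X\times X$ induced by $d$, i.e. $(d(x),d(y))$. *)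

(* Defs.v *)
From Stdlib Require Import Reals.
Open Scope R_scope.

Definition is_KU_algebra {X : Type} (op : X -> X -> X) (z : X) : Prop :=
  (forall x y w, op (op x y) (op (op y w) (op x w)) = z) /\
  (forall x, op x z = z) /\
  (forall x, op z x = x) /\
  (forall x y, op x y = z -> op y x = z -> x = y).

Definition prod_op {X : Type} (op : X -> X -> X) (p q : X * X) : X * X :=
  (op (fst p) (fst q), op (snd p) (snd q)).

Definition is_fuzzy_set {Y : Type} (nu : Y -> R) : Prop :=
  forall a, 0 <= nu a <= 1.

Definition fuzzy_left_derivation_KU_ideal {Y : Type} (op : Y -> Y -> Y) (z : Y)
  (D : Y -> Y) (nu : Y -> R) : Prop :=
  is_fuzzy_set nu /\
  (forall a, nu z >= nu a) /\
  (forall a b c, nu (D (op a c)) >= Rmin (nu (op (D a) (op b c))) (nu (D b))).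

Definition fuzzy_prod {X : Type} (mu beta : X -> R) (p : X * X) : R :=
  Rmin (mu (fst p)) (beta (snd p)).

Definition prod_map {X : Type} (d : X -> X) (p : X * X) : X * X :=
  (d (fst p), d (snd p)).

(* Main.v *)
Require Import Defs.
From Stdlib Require Import Reals Lra.
Open Scope R_scope.

Theorem theorem5p12 (X : Type) (op : X -> X -> X) (z : X) (d : X -> X)
  (mu beta : X -> R) :
  is_KU_algebra op z ->
  fuzzy_left_derivation_KU_ideal op z d mu ->
  fuzzy_left_derivation_KU_ideal op z d beta ->
  fuzzy_left_derivation_KU_ideal (prod_op op) (z, z) (prod_map d)
    (fuzzy_prod mu beta).
Proof.
  intros _ [Fm [Zm Dm]] [Fb [Zb Db]].
  unfold fuzzy_left_derivation_KU_ideal, is_fuzzy_set, fuzzy_prod, prod_op, prod_map.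
  split; [|split].
  - intros [a b]; simpl. specialize (Fm a); specialize (Fb b).
    unfold Rmin; destruct (Rle_dec _ _); lra.
  - intros [a b]; simpl. specialize (Zm a); specialize (Zb b).
    unfold Rmin; repeat destruct (Rle_dec _ _); lra.
  - intros [a1 a2] [b1 b2] [c1 c2]; simpl.
    specialize (Dm a1 b1 c1); specialize (Db a2 b2 c2).
    revert Dm Db. unfold Rmin; repeat destruct (Rle_dec _ _); lra.
Qed.
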